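(* Let $n\geq1$ be an integer, $p>1$ real, $q=pe^{2\pi i/n}$, and $X_{n,p}=\{\sum_{k=0}^{n-1}x_kq^k\mid x_k\in\{0,1\}\}$. For $h=1,\dots,n$ define $$\underline K(h)=\{k\in\{0,\dots,n-1\}\mid (k-h+1)\bmod n\leq \lfloor n/2\rfloor-1\},\qquad \overline K(h)=\{k\in\{0,\dots,n-1\}\mid (k-h+1)\bmod n\leq \lceil n/2\rceil-1\},$$ with $(k-h+1)\bmod n\in\{0,\dots,n-1\}$, and set $\mathbf v_{2h-1}=\sum_{k\in\underline K(h)}q^k$, $\mathbf v_{2h}=\sum_{k\in\overline K(h)}q^k$. Indices of the $\mathbf v_j$ are taken modulo $2n$ (so $\mathbf v_0=\mathbf v_{2n}$), and for $j=1,\dots,2n$ let $\mathbf n_j=-i(\mathbf v_j-\mathbf v_{j-1})$. Then for every $x\in X_{n,p}$ and every $h=1,\dots,n$, $$(x-\mathbf v_{2h-1})\cdot\mathbf n_{2h-1}\leq0\qquad\text{and}\qquad (x-\mathbf v_{2h})\cdot\mathbf n_{2h}\leq 0 .$$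
   Context: For $\mathbf u,\mathbf w\in\mathbb C$, the scalar product is $\mathbf u\cdot\mathbf w=\mathrm{Re}(\mathbf u\,\overline{\mathbf w})=|\mathbf u||\mathbf w|\cos(\arg\mathbf u-\arg\mathbf w)$, i.e. the Euclidean inner product under $\mathbb C\cong\mathbb R^2$. *)

(* Defs.v *)
From Stdlib Require Import Reals Lra Lia ZArith List.
From Coquelicot Require Import Coquelicot.
Open Scope R_scope.

Definition cdot (u w : C) : R := Re (Cmult u (Cconj w)).

Definition csum (l : list nat) (f : nat -> C) : C :=
  fold_right (fun k acc => Cplus (f k) acc) (RtoC 0) l.

Definition qn (n : nat) (p : R) : C :=
  Cmult (RtoC p) (cos (2 * PI / INR n), sin (2 * PI / INR n)).

Definition inX (n : nat) (p : R) (x : C) : Prop :=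
  exists b : nat -> bool,
    x = csum (seq 0 n) (fun k => if b k then Cpow (qn n p) k else RtoC 0).

Definition inKunder (n h k : nat) : bool :=
  Z.leb (Z.modulo (Z.of_nat k - Z.of_nat h + 1)%Z (Z.of_nat n))
        (Z.of_nat (n / 2) - 1)%Z.
Definition inKover (n h k : nat) : bool :=
  Z.leb (Z.modulo (Z.of_nat k - Z.of_nat h + 1)%Z (Z.of_nat n))
        (Z.of_nat ((n + 1) / 2) - 1)%Z.

Definition vunder (n : nat) (p : R) (h : nat) : C :=
  csum (filter (inKunder n h) (seq 0 n)) (fun k => Cpow (qn n p) k).
Definition vover (n : nat) (p : R) (h : nat) : C :=
  csum (filter (inKover n h) (seq 0 n)) (fun k => Cpow (qn n p) k).

(* v_j, index j taken modulo 2n with representative in {1,...,2n};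
   v_{2h-1} = vunder h, v_{2h} = vover h. *)
Definition vv (n : nat) (p : R) (j : Z) : C :=
  let r := Z.modulo j (2 * Z.of_nat n)%Z in
  let j' := if Z.eqb r 0 then (2 * Z.of_nat n)%Z else r in
  if Z.odd j' then vunder n p (Z.to_nat ((j' + 1) / 2)%Z)
  else vover n p (Z.to_nat (j' / 2)%Z).

Definition nn (n : nat) (p : R) (j : Z) : C :=
  Cmult (Copp Ci) (Cminus (vv n p j) (vv n p (j - 1)%Z)).

(* Main.v *)
Require Import Defs.
From Stdlib Require Import Reals ZArith List Lia Lra.
From Coquelicot Require Import Coquelicot.
Open Scope R_scope.

Lemma cdot_eq u w : cdot u w = fst u * fst w + snd u * snd w.
Proof. destruct u, w; unfold cdot, Re, Cconj, Cmult; simpl; ring. Qed.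

Definition rsum (l : list nat) (g : nat -> R) : R :=
  fold_right (fun k acc => g k + acc) 0 l.

Lemma rsum_nonpos l g : (forall k, In k l -> g k <= 0) -> rsum l g <= 0.
Proof.
  induction l; simpl; intros H. lra.
  assert (g a <= 0) by (apply H; auto).
  assert (rsum l g <= 0) by (apply IHl; auto). lra.
Qed.

Lemma cdot_csum_l l f w : cdot (csum l f) w = rsum l (fun k => cdot (f k) w).
Proof.
  induction l; simpl. rewrite cdot_eq; simpl; ring.
  rewrite <- IHl, !cdot_eq. simpl. ring.
Qed.

Lemma cdot_csum_r l f u : cdot u (csum l f) = rsum l (fun k => cdot u (f k)).
Proof.
  induction l; simpl. rewrite cdot_eq; simpl; ring.
  rewrite <- IHl, !cdot_eq. simpl. ring.
Qed.

Lemma csum_minus l f g : Cminus (csum l f) (csum l g) = csum l (fun k => Cminus (f k) (g k)).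
Proof.
  induction l; simpl. apply injective_projections; simpl; ring.
  rewrite <- IHl. apply injective_projections; simpl; ring.
Qed.

Lemma csum_mult l f c : Cmult c (csum l f) = csum l (fun k => Cmult c (f k)).
Proof.
  induction l; simpl. apply injective_projections; simpl; ring.
  rewrite <- IHl. apply injective_projections; simpl; ring.
Qed.

Lemma csum_filter l s f : csum (filter s l) f = csum l (fun k => if s k then f k else RtoC 0).
Proof.
  induction l; simpl; auto. destruct (s a); simpl; rewrite IHl; auto.
  apply injective_projections; simpl; ring.
Qed.

Lemma csum_ext l f g : (forall k, f k = g k) -> csum l f = csum l g.
Proof. intros H; induction l; simpl; auto; rewrite H, IHl; auto. Qed.

Definition alpha (n : nat) := 2 * PI / INR n.

Lemma Cpow_qn n p k : Cpow (qn n p) k =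
  (p ^ k * cos (INR k * alpha n), p ^ k * sin (INR k * alpha n)).
Proof.
  induction k. simpl. rewrite Rmult_0_l, cos_0, sin_0. apply injective_projections; simpl; ring.
  change (Cpow (qn n p) (S k)) with (Cmult (qn n p) (Cpow (qn n p) k)).
  rewrite IHk. unfold qn. rewrite S_INR.
  replace ((INR k + 1) * alpha n) with (alpha n + INR k * alpha n) by ring.
  rewrite cos_plus, sin_plus. unfold alpha. apply injective_projections; simpl; ring.
Qed.

Lemma key_term n p l k :
  cdot (Cpow (qn n p) l) (Cmult (Copp Ci) (Cpow (qn n p) k)) =
  p ^ l * p ^ k * sin (INR k * alpha n - INR l * alpha n).
Proof.
  rewrite !Cpow_qn, cdot_eq, sin_minus. simpl. ring.
Qed.

Definition VV n p (s : nat -> bool) : C :=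
  csum (seq 0 n) (fun k => if s k then Cpow (qn n p) k else RtoC 0).

Definition SS n k l := sin (INR k * alpha n - INR l * alpha n).

Lemma main_gen n p (s s' b : nat -> bool) : 0 < p ->
  (forall k l, (k < n)%nat -> (l < n)%nat -> s k = true -> s' k = false ->
     (s l = true -> 0 <= SS n k l) /\ (s l = false -> SS n k l <= 0)) ->
  (forall k l, (k < n)%nat -> (l < n)%nat -> s k = false -> s' k = true ->
     (s l = true -> SS n k l <= 0) /\ (s l = false -> 0 <= SS n k l)) ->
  cdot (Cminus (VV n p b) (VV n p s)) (Cmult (Copp Ci) (Cminus (VV n p s) (VV n p s'))) <= 0.
Proof.
  intros Hp H1 H2. unfold VV. rewrite !csum_minus, csum_mult, cdot_csum_l.
  apply rsum_nonpos; intros l Hl. rewrite cdot_csum_r.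
  apply rsum_nonpos; intros k Hk. apply in_seq in Hl, Hk.
  assert (HP : 0 < p ^ l * p ^ k) by (apply Rmult_lt_0_compat; apply pow_lt; lra).
  pose proof (key_term n p l k) as HK. fold (SS n k l) in HK.
  specialize (H1 k l ltac:(lia) ltac:(lia)). specialize (H2 k l ltac:(lia) ltac:(lia)).
  set (P := p ^ l * p ^ k) in *. set (S := SS n k l) in *.
  rewrite cdot_eq in HK |- *.
  destruct (Cpow (qn n p) l) as [x1 y1], (Cpow (qn n p) k) as [x2 y2].
  simpl in HK.
  destruct (s k) eqn:Esk, (s' k) eqn:Es'k.
  - destruct (b l), (s l); simpl; nra.
  - destruct (H1 eq_refl eq_refl) as [Ha Hb].
    destruct (b l), (s l); simpl; try specialize (Ha eq_refl); try specialize (Hb eq_refl); nra.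
  - destruct (H2 eq_refl eq_refl) as [Ha Hb].
    destruct (b l), (s l); simpl; try specialize (Ha eq_refl); try specialize (Hb eq_refl); nra.
  - destruct (b l), (s l); simpl; nra.
Qed.

Lemma sin_Zperiod x t : sin (x + IZR t * (2 * PI)) = sin x.
Proof.
  destruct t as [|q|q].
  - simpl. rewrite Rmult_0_l, Rplus_0_r. auto.
  - rewrite <- positive_nat_Z, <- INR_IZR_INZ.
    replace (INR (Pos.to_nat q) * (2 * PI)) with (2 * INR (Pos.to_nat q) * PI) by ring.
    apply sin_period.
  - replace (IZR (Z.neg q)) with (- INR (Pos.to_nat q)).
    2:{ rewrite INR_IZR_INZ, positive_nat_Z, <- opp_IZR. reflexivity. }
    set (y := x + - INR (Pos.to_nat q) * (2 * PI)).
    assert (Hx : x = y + 2 * INR (Pos.to_nat q) * PI) by (unfold y; ring).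
    rewrite Hx at 1.
    symmetry; apply sin_period.
Qed.

Lemma SS_res n k l c : (1 <= n)%nat ->
  SS n k l = sin (IZR ((((Z.of_nat k - c) mod Z.of_nat n) - ((Z.of_nat l - c) mod Z.of_nat n)) mod Z.of_nat n)%Z * alpha n).
Proof.
  intros Hn. unfold SS.
  rewrite <- Zminus_mod.
  replace (Z.of_nat k - c - (Z.of_nat l - c))%Z with (Z.of_nat k - Z.of_nat l)%Z by ring.
  set (z := (Z.of_nat k - Z.of_nat l)%Z).
  assert (HN : (Z.of_nat n <> 0)%Z) by lia.
  pose proof (Z.div_mod z (Z.of_nat n) HN) as Hd.
  replace (INR k * alpha n - INR l * alpha n) with (IZR z * alpha n).
  2:{ unfold z. rewrite minus_IZR, <- !INR_IZR_INZ. ring. }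
  rewrite Hd at 1. rewrite plus_IZR, mult_IZR, <- INR_IZR_INZ.
  assert (INR n <> 0) by (apply not_0_INR; lia).
  replace ((INR n * IZR (z / Z.of_nat n) + IZR (z mod Z.of_nat n)) * alpha n)
    with (IZR (z mod Z.of_nat n) * alpha n + IZR (z / Z.of_nat n) * (2 * PI)).
  2:{ unfold alpha. field. auto. }
  apply sin_Zperiod.
Qed.

Lemma sin_sign n m : (1 <= n)%nat -> (0 <= m < Z.of_nat n)%Z ->
  ((2 * m <= Z.of_nat n)%Z -> 0 <= sin (IZR m * alpha n)) /\
  ((Z.of_nat n <= 2 * m)%Z -> sin (IZR m * alpha n) <= 0).
Proof.
  intros Hn [Hm0 Hm1].
  assert (HnR : 0 < INR n) by (apply lt_0_INR; lia).
  assert (E : IZR m * alpha n = PI * (2 * IZR m / INR n)) by (unfold alpha; field; lra).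
  rewrite E. pose proof PI_RGT_0.
  assert (0 <= IZR m) by (apply IZR_le; lia).
  assert (IZR m < INR n) by (rewrite INR_IZR_INZ; apply IZR_lt; lia).
  split; intros Hc.
  - apply sin_ge_0.
    + apply Rmult_le_pos; [lra|]. apply Rmult_le_pos; [lra|]. left; apply Rinv_0_lt_compat; lra.
    + assert (2 * IZR m <= INR n) by (rewrite INR_IZR_INZ, <- mult_IZR; apply IZR_le; lia).
      assert (2 * IZR m / INR n <= 1).
      { apply Rmult_le_reg_r with (INR n); auto. unfold Rdiv. rewrite Rmult_assoc, Rinv_l; lra. }
      nra.
  - apply sin_le_0.
    + assert (INR n <= 2 * IZR m) by (rewrite INR_IZR_INZ, <- mult_IZR; apply IZR_le; lia).
      assert (1 <= 2 * IZR m / INR n).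
      { apply Rmult_le_reg_r with (INR n); auto. unfold Rdiv. rewrite Rmult_assoc, Rinv_l; lra. }
      nra.
    + assert (2 * IZR m / INR n <= 2).
      { apply Rmult_le_reg_r with (INR n); auto. unfold Rdiv. rewrite Rmult_assoc, Rinv_l; lra. }
      nra.
Qed.

Lemma modcase a b N : (0 <= a < N)%Z -> (0 <= b < N)%Z ->
  ((a - b) mod N = a - b /\ b <= a \/ (a - b) mod N = a - b + N /\ a < b)%Z.
Proof.
  intros Ha Hb. destruct (Z_le_gt_dec b a).
  - left. split; auto. apply Z.mod_small. lia.
  - right. split; [|lia]. rewrite <- (Z.mod_add (a - b) 1 N) by lia. rewrite Z.mul_1_l.
    apply Z.mod_small. lia.
Qed.

Lemma VV_ext n p s s' : (forall k, s k = s' k) -> VV n p s = VV n p s'.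
Proof. intros H; unfold VV; apply csum_ext; intros k; rewrite H; auto. Qed.

Lemma half2 x : ((2 * x) / 2 = x)%Z.
Proof. rewrite Z.mul_comm. apply Z.div_mul. lia. Qed.

Lemma vv_odd n p h : (1 <= h <= n)%nat ->
  vv n p (2 * Z.of_nat h - 1)%Z = VV n p (inKunder n h).
Proof.
  intros Hh. unfold vv.
  replace ((2 * Z.of_nat h - 1) mod (2 * Z.of_nat n))%Z with (2 * (Z.of_nat h - 1) + 1)%Z
    by (rewrite Z.mod_small; lia).
  destruct (Z.eqb_spec (2 * (Z.of_nat h - 1) + 1) 0); [lia|].
  rewrite Z.odd_odd.
  replace (2 * (Z.of_nat h - 1) + 1 + 1)%Z with (2 * Z.of_nat h)%Z by ring.
  rewrite half2, Nat2Z.id. unfold vunder, VV. apply csum_filter.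
Qed.

Lemma vv_even n p h : (1 <= h <= n)%nat ->
  vv n p (2 * Z.of_nat h)%Z = VV n p (inKover n h).
Proof.
  intros Hh. unfold vv.
  replace (if ((2 * Z.of_nat h) mod (2 * Z.of_nat n) =? 0)%Z then (2 * Z.of_nat n)%Z
           else ((2 * Z.of_nat h) mod (2 * Z.of_nat n))%Z) with (2 * Z.of_nat h)%Z.
  2:{ destruct (Nat.eq_dec h n).
      - subst. rewrite Z.mod_same by lia. reflexivity.
      - rewrite Z.mod_small by lia. destruct (Z.eqb_spec (2 * Z.of_nat h) 0); lia. }
  rewrite Z.odd_even, half2, Nat2Z.id. unfold vover, VV. apply csum_filter.
Qed.

Lemma vv_prev n p h : (1 <= h <= n)%nat ->
  vv n p (2 * Z.of_nat h - 1 - 1)%Z =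
  VV n p (fun k => Z.leb ((Z.of_nat k - Z.of_nat h + 2) mod Z.of_nat n)%Z
                         (Z.of_nat ((n + 1) / 2) - 1)%Z).
Proof.
  intros Hh. destruct (Nat.eq_dec h 1).
  - subst. unfold vv.
    replace ((2 * Z.of_nat 1 - 1 - 1) mod (2 * Z.of_nat n))%Z with 0%Z by (rewrite Z.mod_0_l; lia).
    simpl Z.eqb. cbv iota. rewrite Z.odd_even, half2, Nat2Z.id. unfold vover, VV.
    rewrite csum_filter. apply csum_ext; intros k. unfold inKover.
    replace (Z.of_nat k - Z.of_nat n + 1)%Z with (Z.of_nat k - Z.of_nat 1 + 2 + (-1) * Z.of_nat n)%Z by lia.
    rewrite Z.mod_add by lia. reflexivity.
  - replace (2 * Z.of_nat h - 1 - 1)%Z with (2 * Z.of_nat (h - 1))%Z by lia.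
    rewrite vv_even by lia. apply VV_ext; intros k. unfold inKover.
    replace (Z.of_nat k - Z.of_nat (h - 1) + 1)%Z with (Z.of_nat k - Z.of_nat h + 2)%Z by lia.
    reflexivity.
Qed.

Lemma FC n : (1 <= n)%nat ->
  (2 * Z.of_nat (n / 2) <= Z.of_nat n <= 2 * Z.of_nat (n / 2) + 1)%Z /\
  (Z.of_nat n <= 2 * Z.of_nat ((n + 1) / 2) <= Z.of_nat n + 1)%Z.
Proof.
  intros. pose proof (Nat.div_mod n 2 ltac:(lia)). pose proof (Nat.mod_upper_bound n 2 ltac:(lia)).
  pose proof (Nat.div_mod (n+1) 2 ltac:(lia)). pose proof (Nat.mod_upper_bound (n+1) 2 ltac:(lia)). lia.
Qed.

Ltac finish n Hn :=
  first [ exfalso; lia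
        | match goal with
          | |- 0 <= sin (IZR ?m * _) => apply (proj1 (sin_sign n m Hn ltac:(lia))); lia
          | |- sin (IZR ?m * _) <= 0 => apply (proj2 (sin_sign n m Hn ltac:(lia))); lia
          end ].

Ltac setup n h k l Hn :=
  rewrite (SS_res n k l (Z.of_nat h - 1)) by lia;
  replace (Z.of_nat k - (Z.of_nat h - 1))%Z with (Z.of_nat k - Z.of_nat h + 1)%Z by ring;
  replace (Z.of_nat l - (Z.of_nat h - 1))%Z with (Z.of_nat l - Z.of_nat h + 1)%Z by ring;
  destruct (FC n Hn) as [HF HC];
  set (N := Z.of_nat n) in *;
  set (F := Z.of_nat (n / 2)) in *; set (C := Z.of_nat ((n + 1) / 2)) in *;
  set (a := ((Z.of_nat k - Z.of_nat h + 1) mod N)%Z) in *;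
  set (b := ((Z.of_nat l - Z.of_nat h + 1) mod N)%Z) in *;
  assert (Ha : (0 <= a < N)%Z) by (apply Z.mod_pos_bound; lia);
  assert (Hb : (0 <= b < N)%Z) by (apply Z.mod_pos_bound; lia);
  destruct (modcase a b N Ha Hb) as [[Hm ?]|[Hm ?]]; rewrite Hm.

Lemma hyp_odd n h : (1 <= n)%nat -> (1 <= h <= n)%nat ->
  let s := inKunder n h in
  let s' := fun k => Z.leb ((Z.of_nat k - Z.of_nat h + 2) mod Z.of_nat n)%Z
                         (Z.of_nat ((n + 1) / 2) - 1)%Z in
  (forall k l, (k < n)%nat -> (l < n)%nat -> s k = true -> s' k = false ->
     (s l = true -> 0 <= SS n k l) /\ (s l = false -> SS n k l <= 0)) /\
  (forall k l, (k < n)%nat -> (l < n)%nat -> s k = false -> s' k = true ->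
     (s l = true -> SS n k l <= 0) /\ (s l = false -> 0 <= SS n k l)).
Proof.
  intros Hn Hh. cbv zeta. unfold inKunder.
  split; intros k l Hk Hl;
  setup n h k l Hn;
  replace ((Z.of_nat k - Z.of_nat h + 2) mod N)%Z with ((a + 1) mod N)%Z
    by (unfold a; rewrite Z.add_mod_idemp_l by lia; f_equal; ring);
  (destruct (Z.eq_dec a (N - 1)) as [Ea|Ea];
   [ replace ((a + 1) mod N)%Z with 0%Z by (rewrite Ea; replace (N - 1 + 1)%Z with N by ring; rewrite Z.mod_same; lia)
   | replace ((a + 1) mod N)%Z with (a + 1)%Z by (rewrite Z.mod_small; lia) ]);
  destruct (Z.leb_spec a (F - 1)); destruct (Z.leb_spec b (F - 1));
  try destruct (Z.leb_spec 0 (C - 1)); try destruct (Z.leb_spec (a + 1) (C - 1));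
  intros; try discriminate; split; intros; try discriminate; finish n Hn.
Qed.

Lemma hyp_even n h : (1 <= n)%nat -> (1 <= h <= n)%nat ->
  let s := inKover n h in
  let s' := inKunder n h in
  (forall k l, (k < n)%nat -> (l < n)%nat -> s k = true -> s' k = false ->
     (s l = true -> 0 <= SS n k l) /\ (s l = false -> SS n k l <= 0)) /\
  (forall k l, (k < n)%nat -> (l < n)%nat -> s k = false -> s' k = true ->
     (s l = true -> SS n k l <= 0) /\ (s l = false -> 0 <= SS n k l)).
Proof.
  intros Hn Hh. cbv zeta. unfold inKunder, inKover.
  split; intros k l Hk Hl;
  setup n h k l Hn;
  destruct (Z.leb_spec a (F - 1)); destruct (Z.leb_spec a (C - 1)); destruct (Z.leb_spec b (C - 1));
  intros; try discriminate; split; intros; try discriminate; finish n Hn.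
Qed.

Theorem lemma3p13 (n : nat) (p : R) :
  (1 <= n)%nat -> 1 < p ->
  forall x : C, inX n p x ->
  forall h : nat, (1 <= h <= n)%nat ->
    cdot (Cminus x (vv n p (2 * Z.of_nat h - 1)%Z)) (nn n p (2 * Z.of_nat h - 1)%Z) <= 0 /\
    cdot (Cminus x (vv n p (2 * Z.of_nat h)%Z)) (nn n p (2 * Z.of_nat h)%Z) <= 0.
Proof.
  intros Hn Hp x [bb Hx] h Hh.
  assert (Ex : x = VV n p bb) by (rewrite Hx; reflexivity).
  unfold nn. rewrite Ex.
  replace (2 * Z.of_nat h - 1)%Z with (2 * Z.of_nat h - 1)%Z by reflexivity.
  split.
  - rewrite vv_odd, vv_prev by auto.
    destruct (hyp_odd n h Hn Hh) as [H1 H2].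
    apply main_gen; auto; lra.
  - replace (2 * Z.of_nat h - 1)%Z with (2 * Z.of_nat h - 1)%Z by reflexivity.
    rewrite vv_even, vv_odd by auto.
    destruct (hyp_even n h Hn Hh) as [H1 H2].
    apply main_gen; auto; lra.
Qed.
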